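(* Let $(f,\preceq)$ be a flow for a geometry $(G,I,O)$. Then there is a path cover $\mathcal P_f$ of $(G,I,O)$ such that for all vertices $v,w \in V(G)$, $v \to w$ is an arc of some path of $\mathcal P_f$ if and only if $v \in O^c$ and $w = f(v)$.
   Context: All graphs are finite, simple and undirected, with no self-loops; $v \sim w$ denotes adjacency. A geometry is a triple $(G,I,O)$ with $G$ a graph and $I,O\subseteq V(G)$; $O^c = V(G)\setminus O$, $I^c = V(G)\setminus I$. A flow for $(G,I,O)$ is a pair $(f,\preceq)$ with $f:O^c\to I^c$ a function and $\preceq$ a partial order on $V(G)$ such that for all $v\in O^c$, $w\in V(G)$: $v\sim f(v)$; $v\preceq f(v)$; and $w\sim f(v)\Rightarrow v\preceq w$. A directed path in $G$ is a sequence of distinct vertices $u_0,\dots,u_\ell$ ($\ell\ge 0$; $\ell=0$ is a trivial path) with $u_{i}\sim u_{i+1}$, whose arcs are $u_i\to u_{i+1}$. A path cover of $(G,I,O)$ is a collection $\mathcal C$ of directed paths in $G$ such that (i) every vertex of $G$ lies on exactly one path of $\mathcal C$; (ii) each path of $\mathcal C$ is either disjoint from $I$ or meets $I$ only at its initial vertex; (iii) each path of $\mathcal C$ meets $O$ only at its final vertex (in particular, its final vertex lies in $O$). *)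

(* Defs.v *)
From mathcomp Require Import all_boot.
Set Implicit Arguments. Unset Strict Implicit. Unset Printing Implicit Defensive.

Definition simple_graph (T : finType) (G : rel T) : Prop :=
  symmetric G /\ irreflexive G.

Definition partial_order (T : finType) (le : rel T) : Prop :=
  [/\ reflexive le, antisymmetric le & transitive le].

(* The function f : O^c -> I^c is
   represented by a total function T -> T of which only the restriction to
   O^c matters; its values on O^c are required to lie in I^c. *)
Definition is_flow (T : finType) (G : rel T) (I O : {set T})
    (f : T -> T) (le : rel T) : Prop :=
  partial_order le /\
  forall v : T, v \notin O ->
    [/\ f v \notin I, G v (f v), le v (f v) &
        forall w : T, G w (f v) -> le v w].

Definition is_dpath (T : finType) (G : rel T) (p : seq T) : bool :=
  match p with
  | [::] => false
  | x :: q => uniq p && path G x q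
  end.

Definition is_arc (T : finType) (p : seq T) (v w : T) : bool :=
  (v, w) \in zip p (behead p).

Definition is_path_cover (T : finType) (G : rel T) (I O : {set T})
    (C : seq (seq T)) : Prop :=
  [/\ (forall p, p \in C -> is_dpath G p),
      (forall x : T, count (fun p => x \in p) C = 1),
      (forall p, p \in C -> all (fun x => x \notin I) (behead p)) &
      (forall p, p \in C ->
         match p with
         | [::] => False
         | x :: q => (last x q \in O) /\ all (fun y => y \notin O) (belast x q)
         end)].

(* Main.v *)
Require Import Defs.
From mathcomp Require Import all_boot.
Set Implicit Arguments. Unset Strict Implicit.

Lemma flow_chain (T : finType) (G : rel T) (I O : {set T}) (f : T -> T) (le : rel T)
  (hF : is_flow G I O f le) x m d :
  (forall t, t < d -> iter (m + t) f x \notin O) -> le (iter m f x) (iter (m + d) f x).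
Proof.
case: hF => [[hr ha ht] hf].
elim: d => [|d IH] H; first by rewrite addn0 hr.
apply: (ht (iter (m + d) f x)); first by apply: IH => t lt; apply: H; apply: ltnW.
rewrite addnS iterS; have /hf[_ _ h _] := H d (ltnSn d); exact: h.
Qed.

Lemma flow_distinct (T : finType) (G : rel T) (I O : {set T}) (f : T -> T) (le : rel T)
  (hG : irreflexive G) (hF : is_flow G I O f le) x i j :
  i < j -> (forall t, t < j -> iter t f x \notin O) -> iter i f x != iter j f x.
Proof.
move=> lij H; apply/eqP => E.
have hF' := hF; case: hF' => [[hr ha ht] hf].
have Hi : iter i f x \notin O by apply: H.
have [_ hG1 hle _] := hf _ Hi.
have c := @flow_chain T G I O f le hF x i.+1 (j - i.+1).
rewrite subnKC // -E in c.
have c' : le (iter i.+1 f x) (iter i f x).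
  apply: c => t lt; apply: H; rewrite -(subnKC lij) ltn_add2l; exact: lt.
have eq : iter i f x = f (iter i f x) by apply: ha; rewrite hle c'.
by move: hG1; rewrite -eq hG.
Qed.

Lemma flow_bound (T : finType) (G : rel T) (I O : {set T}) (f : T -> T) (le : rel T)
  (hG : irreflexive G) (hF : is_flow G I O f le) y n :
  (forall t, t < n -> iter t f y \notin O) -> n < #|T|.
Proof.
move=> H.
have inj : injective (fun i : 'I_n.+1 => iter i f y).
  move=> i j /= E; apply/val_inj => /=.
  have Hi := ltn_ord i; have Hj := ltn_ord j.
  case: (ltngtP i j) => // lt.
  - have := @flow_distinct T G I O f le hG hF y i j lt.
    by rewrite E eqxx => /(_ (fun t lt' => H t (leq_trans lt' Hj))).
  - have := @flow_distinct T G I O f le hG hF y j i lt.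
    by rewrite E eqxx => /(_ (fun t lt' => H t (leq_trans lt' Hi))).
by have := leq_card _ inj; rewrite card_ord.
Qed.

Definition kk (T : finType) (O : {set T}) (f : T -> T) (x : T) :=
  find (fun n => iter n f x \in O) (iota 0 #|T|.+1).

Lemma kk_spec (T : finType) (G : rel T) (I O : {set T}) (f : T -> T) (le : rel T)
  (hG : irreflexive G) (hF : is_flow G I O f le) x :
  [/\ kk O f x <= #|T|, iter (kk O f x) f x \in O &
      forall m, m < kk O f x -> iter m f x \notin O].
Proof.
have hh : has (fun n => iter n f x \in O) (iota 0 #|T|.+1).
  apply/negPn/negP => /hasPn Hn.
  have : #|T|.+1 < #|T|.
    apply: (@flow_bound T G I O f le hG hF x) => t lt.
    by apply: Hn; rewrite mem_iota add0n.
  by rewrite ltnNge leqnSn.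
have hs : kk O f x < #|T|.+1 by rewrite /kk -{2}(size_iota 0 #|T|.+1) -has_find.
split => //.
  by have := nth_find 0 hh; rewrite nth_iota.
move=> m lm; have := before_find 0 lm; rewrite nth_iota ?(ltn_trans lm) //.
by move=> ->.
Qed.

Lemma zip_traject (T : Type) (f : T -> T) x n :
  zip (traject f x n.+1) (traject f (f x) n) =
  [seq (iter i f x, iter i.+1 f x) | i <- iota 0 n].
Proof.
elim: n x => [|n IH] x //.
rewrite trajectS [traject f (f x) n.+1]trajectS /= IH; congr cons.
rewrite (iotaDl 1 0) -map_comp; apply: eq_map => i /=.
by rewrite -!iterSr.
Qed.

Lemma belast_traject (T : Type) (f : T -> T) x n :
  belast x (traject f (f x) n) = traject f x n.
Proof.
case: n => // n; rewrite trajectSr belast_rcons -trajectS //.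
Qed.

Theorem mainTheorem2 (T : finType) (G : rel T) (I O : {set T})
    (f : T -> T) (le : rel T) :
  simple_graph G ->
  is_flow G I O f le ->
  exists C : seq (seq T),
    is_path_cover G I O C /\
    forall v w : T,
      (exists2 p, p \in C & is_arc p v w) <-> (v \notin O /\ w = f v).
Proof.
move=> [_ hG] hF.
have hF' := hF; case: hF' => [[hr ha ht] hf].
pose k := kk O f.
pose P x := traject f x (k x).+1.
have Kx := fun x => kk_spec hG hF x.
have K2 : forall x, iter (k x) f x \in O by move=> x; case: (Kx x).
have K3 : forall x m, m < k x -> iter m f x \notin O by move=> x; case: (Kx x).
pose starts := [seq x <- enum T | [forall v, (v \notin O) ==> (f v != x)]].
have stE : forall s, s \in starts -> forall v, v \notin O -> f v != s.
  by move=> s; rewrite mem_filter => /andP[/forallP H _] v; apply/implyP.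
have finj : forall a b, a \notin O -> b \notin O -> f a = f b -> a = b.
  move=> a b Ha Hb E; apply: ha.
  have [_ _ _ h1] := hf _ Ha; have [_ g2 _ h2] := hf _ Hb; have [_ g1 _ _] := hf _ Ha.
  by rewrite (h1 b) ?E // (h2 a) // -E.
have U : forall i j s s', s \in starts -> s' \in starts -> i <= k s -> j <= k s' ->
    iter i f s = iter j f s' -> s = s'.
  elim=> [|i IH] [|j] s s' Hs Hs' Hi Hj //=.
  - move=> E; have := stE _ Hs _ (K3 _ _ Hj); by rewrite -E eqxx.
  - move=> E; have := stE _ Hs' _ (K3 _ _ Hi); by rewrite E eqxx.
  - move/finj => E; apply: (IH j) => //; try exact: ltnW.
    apply: E; [exact: K3|exact: K3].
have Ex : forall y, exists2 s, s \in starts & exists2 i, i <= k s & y = iter i f s.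
  move=> y.
  pose Q : pred nat := fun n => [exists s, (iter n f s == y) && [forall m : 'I_n, iter m f s \notin O]].
  have Q0 : exists n, Q n.
    by exists 0; apply/existsP; exists y; rewrite eqxx; apply/forallP => -[].
  have Qb : forall n, Q n -> n <= #|T|.
    move=> n /existsP[s /andP[_ /forallP H]]; apply: ltnW.
    apply: (flow_bound hG hF (y:=s)) => t lt; exact: (H (Ordinal lt)).
  case: (ex_maxnP Q0 Qb) => n /existsP[s /andP[/eqP Es /forallP Hs]] Hmax.
  exists s.
    rewrite mem_filter mem_enum andbT; apply/forallP => v; apply/implyP => Hv.
    apply/negP => /eqP Efv.
    have : Q n.+1.
      apply/existsP; exists v; rewrite iterSr Efv Es eqxx /=.
      apply/forallP => -[[|m] lm] //=.
      rewrite -iterS iterSr Efv; exact: (Hs (Ordinal (lm : m < n))).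
    by move/Hmax; rewrite ltnn.
  exists n => //.
  rewrite leqNgt; apply/negP => lt.
  by have := Hs (Ordinal lt); rewrite /= K2.
have arcE : forall s v w, is_arc (P s) v w =
    ((v, w) \in [seq (iter i f s, iter i.+1 f s) | i <- iota 0 (k s)]).
  move=> s v w; rewrite /is_arc /P.
  have -> : behead (traject f s (k s).+1) = traject f (f s) (k s) by rewrite trajectS.
  by rewrite zip_traject.
exists (map P starts); split.
  split.
  - move=> p /mapP[s Hs ->].
    have Hu : uniq (traject f s (k s).+1).
      apply/(uniqP s) => i j; rewrite !inE size_traject => hi hj.
      rewrite !nth_traject // => E; apply/eqP; case: (ltngtP i j) => // lt.
      + have := flow_distinct hG hF lt (fun t lt' => K3 s t (leq_trans lt' hj)).
        by rewrite E eqxx.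
      + have := flow_distinct hG hF lt (fun t lt' => K3 s t (leq_trans lt' hi)).
        by rewrite E eqxx.
    rewrite /P trajectS /=; apply/andP; split; first by move: Hu; rewrite trajectS.
    apply/(pathP s) => i; rewrite size_traject => hi.
    rewrite -trajectS nth_traject; last exact: ltnW.
    rewrite (set_nth_default (f s)) ?size_traject // nth_traject // -iterSr.
    by have [_ h _ _] := hf _ (K3 _ _ hi).
  - move=> y; rewrite count_map.
    case: (Ex y) => s0 Hs0 [j hj Ey].
    rewrite (@eq_in_count _ _ (pred1 s0)).
      by rewrite count_uniq_mem ?Hs0 // filter_uniq // enum_uniq.
    move=> s Hs /=; apply/idP/eqP.
      move/trajectP => [i hi Eyi]; apply: (U i j) => //; by rewrite -Eyi.
    move=> ->; apply/trajectP; by exists j.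
  - move=> p /mapP[s Hs ->]; rewrite /P trajectS /=.
    apply/allP => z /trajectP [i hi ->]; rewrite -iterSr iterS.
    by have [h _ _ _] := hf _ (K3 _ _ hi).
  - move=> p /mapP[s Hs ->]; rewrite /P trajectS; split.
      by rewrite last_traject.
    rewrite belast_traject; apply/allP => z /trajectP [i hi ->]; exact: K3.
move=> v w; split.
  move=> [p /mapP [s Hs ->] Ha]; rewrite arcE in Ha; case/mapP: Ha => i.
  rewrite mem_iota add0n => /andP[_ hi] [-> ->].
  by split; [exact: K3|].
move=> [hv ->]; case: (Ex v) => s Hs [i hi Ev].
exists (P s); first exact: map_f.
rewrite arcE; apply/mapP; exists i; last by rewrite Ev.
rewrite mem_iota add0n /= ltn_neqAle hi andbT; apply/eqP => Eik.
by move: hv; rewrite Ev Eik K2.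
Qed.
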